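(* Let $0<d<\pi/2$, $\mathscr{D}_d=\{\zeta\in\mathbb{C}:|\Im\zeta|<d\}$, $\psi(t)=\operatorname{arcsinh}(e^t)$. Assume $f$ is analytic on $\psi(\mathscr{D}_d)$ and there are constants $K,\alpha,\beta>0$ with $|f(z)|\le K\left|\left(\frac{z}{1+z}\right)^{\alpha-1}e^{-\beta z}\right|$ for all $z\in\psi(\mathscr{D}_d)$. Then $F(\zeta)=f(\psi(\zeta))\psi'(\zeta)$ belongs to $\mathbf{L}^{\mathrm{SE}}_{L,R,\alpha,\beta}(\mathscr{D}_d)$ with $L=2^{\beta/2}c_{\alpha,d}K$ and $R=2^{(1-\alpha+|1-\alpha|)/2}K$, where $c_{\alpha,d}=\{2(1+1/\cos d)\}^{(1-\alpha)/2}$ if $0<\alpha<1$ and $c_{\alpha,d}=2^{(\alpha-1)/2}$ if $\alpha\ge1$.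
   Context: For positive $L,R,\alpha,\beta$ and $0<d<\pi/2$, $\mathbf{L}^{\mathrm{SE}}_{L,R,\alpha,\beta}(\mathscr{D}_d)$ is the set of functions $F$ analytic on $\mathscr{D}_d$ such that for all $\zeta\in\mathscr{D}_d$, $|F(\zeta)|\le L\,|1+e^{-2\zeta}|^{-\alpha/2}|1+e^{2\zeta}|^{-\beta/2}$, and for all $x\in\mathbb{R}$, $|F(x)|\le R\,(1+e^{-2x})^{-\alpha/2}(1+e^{2x})^{-\beta/2}$. Here $\psi'(\zeta)=e^{\zeta}/\sqrt{1+e^{2\zeta}}$; complex functions use principal branches. *)

(* Defs.v *)
From Stdlib Require Import Reals Lra.
From Coquelicot Require Import Coquelicot.
Open Scope R_scope.

Definition Cexp (z : C) : C :=
  (exp (Re z) * cos (Im z), exp (Re z) * sin (Im z)).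

Definition Arg (z : C) : R :=
  let x := Re z in let y := Im z in
  if Rlt_dec 0 x then atan (y / x)
  else if Rlt_dec x 0 then
    (if Rle_dec 0 y then atan (y / x) + PI else atan (y / x) - PI)
  else if Rlt_dec 0 y then PI / 2
  else if Rlt_dec y 0 then - (PI / 2)
  else 0.

(** Principal logarithm (only meaningful for z <> 0). *)
Definition Clog (z : C) : C := (ln (Cmod z), Arg z).

(** Principal (complex-exponent) power z^w = exp (w Log z), with the convention 0^w = 0. *)
Definition Cpowp (z w : C) : C :=
  if Ceq_dec z 0 then 0%C else Cexp (w * Clog z)%C.

Definition Csqrt (z : C) : C := Cpowp z (RtoC (1/2)).

Definition Casinh (w : C) : C := Clog (w + Csqrt (w * w + 1))%C.

(** psi(t) = arcsinh(e^t) and psi'(t) = e^t / sqrt(1 + e^{2t}). *)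
Definition psi (t : C) : C := Casinh (Cexp t).
Definition dpsi (t : C) : C := (Cexp t / Csqrt (1 + Cexp (2 * t)))%C.

Definition strip (d : R) (zeta : C) : Prop := Rabs (Im zeta) < d.

Definition psi_strip (d : R) (z : C) : Prop :=
  exists zeta, strip d zeta /\ z = psi zeta.

Definition analytic_on (S : C -> Prop) (f : C -> C) : Prop :=
  forall z, S z -> @ex_derive C_AbsRing C_NormedModule f z.

Definition LSE (L Rc alpha beta d : R) (F : C -> C) : Prop :=
  analytic_on (strip d) F /\
  (forall zeta, strip d zeta ->
     Cmod (F zeta) <=
       L * Rpower (Cmod (1 + Cexp (- (2 * zeta)))%C) (- alpha / 2)
         * Rpower (Cmod (1 + Cexp (2 * zeta))%C) (- beta / 2)) /\
  (forall x : R,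
     Cmod (F (RtoC x)) <=
       Rc * Rpower (1 + exp (- (2 * x))) (- alpha / 2)
          * Rpower (1 + exp (2 * x)) (- beta / 2)).

Definition c_const (alpha d : R) : R :=
  if Rlt_dec alpha 1 then Rpower (2 * (1 + 1 / cos d)) ((1 - alpha) / 2)
  else Rpower 2 ((alpha - 1) / 2).

(* Main.v *)
Require Import Defs.
From Stdlib Require Import Reals Lra Psatz.
From Coquelicot Require Import Coquelicot.
Open Scope R_scope.

Lemma Ceq (z w : C) : fst z = fst w -> snd z = snd w -> z = w.
Proof. destruct z, w; simpl; intros; subst; reflexivity. Qed.

Lemma Cexp_add (a b : C) : Cexp (a + b)%C = (Cexp a * Cexp b)%C.
Proof.
  destruct a as [x y], b as [u v]; unfold Cexp, Cmult, Cplus; simpl.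
  rewrite exp_plus, cos_plus, sin_plus. apply Ceq; simpl; ring.
Qed.

Lemma Cexp_0 : Cexp 0%C = 1%C.
Proof. unfold Cexp; simpl. rewrite exp_0, cos_0, sin_0. apply Ceq; simpl; ring. Qed.

Lemma Cmod_Cexp (z : C) : Cmod (Cexp z) = exp (Re z).
Proof.
  destruct z as [x y]; unfold Cmod, Cexp; cbn [fst snd Re Im].
  assert (H := sin2_cos2 y). unfold Rsqr in H.
  replace ((exp x * cos y) ^ 2 + (exp x * sin y) ^ 2) with ((exp x)^2)
    by (transitivity ((exp x)^2 * (sin y * sin y + cos y * cos y)); [rewrite H|]; ring).
  apply sqrt_pow2. left; apply exp_pos.
Qed.

Lemma Cexp_neq0 (z : C) : Cexp z <> 0%C.
Proof.
  intro H. assert (Cmod (Cexp z) = 0) by (rewrite H; apply Cmod_0).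
  rewrite Cmod_Cexp in H0. pose proof (exp_pos (Re z)). lra.
Qed.

Lemma sqrt_factor (x y : R) : x <> 0 ->
  sqrt (x ^ 2 + y ^ 2) = Rabs x * sqrt (1 + (y / x)²).
Proof.
  intros Hx. rewrite <- sqrt_Rsqr_abs, <- sqrt_mult.
  - f_equal. unfold Rsqr. field. auto.
  - apply Rle_0_sqr.
  - pose proof (Rle_0_sqr (y/x)). lra.
Qed.

Lemma Cmod_pos (z : C) : z <> 0%C -> 0 < Cmod z.
Proof.
  intro H. destruct (Cmod_ge_0 z) as [H1|H1]; auto.
  exfalso. apply H. apply Cmod_eq_0. auto.
Qed.

Lemma Cexp_Clog (z : C) : z <> 0%C -> Cexp (Clog z) = z.
Proof.
  intros Hz. pose proof (Cmod_pos z Hz) as Hm.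
  unfold Clog, Cexp. cbn [fst snd Re Im]. rewrite exp_ln by auto.
  destruct z as [x y]. unfold Arg; cbn [fst snd Re Im].
  assert (Hs : forall t, 0 < sqrt (1 + t²)).
  { intro t. apply sqrt_lt_R0. pose proof (Rle_0_sqr t). lra. }
  destruct (Rlt_dec 0 x) as [Hx|Hx].
  - unfold Cmod; cbn [fst snd]. rewrite sqrt_factor by lra.
    rewrite cos_atan, sin_atan. pose proof (Hs (y/x)).
    rewrite Rabs_pos_eq by lra. apply Ceq; cbn [fst snd]; field; lra.
  - destruct (Rlt_dec x 0) as [Hx'|Hx'].
    + unfold Cmod; cbn [fst snd]. rewrite sqrt_factor by lra.
      rewrite Rabs_left by lra. pose proof (Hs (y/x)).
      destruct (Rle_dec 0 y).
      * rewrite neg_cos, neg_sin, cos_atan, sin_atan.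
        apply Ceq; cbn [fst snd]; field; lra.
      * rewrite cos_minus, sin_minus, cos_PI, sin_PI, cos_atan, sin_atan.
        apply Ceq; cbn [fst snd]; field; lra.
    + assert (x = 0) by lra. subst x.
      unfold Cmod; cbn [fst snd].
      replace (0 ^ 2 + y ^ 2) with (y * y) by ring.
      destruct (Rlt_dec 0 y).
      * rewrite sqrt_square by lra. rewrite cos_PI2, sin_PI2.
        apply Ceq; cbn [fst snd]; ring.
      * destruct (Rlt_dec y 0).
        -- replace (y * y) with ((-y)*(-y)) by ring. rewrite sqrt_square by lra.
           rewrite cos_neg, sin_neg, cos_PI2, sin_PI2.
           apply Ceq; cbn [fst snd]; ring.
        -- exfalso. apply Hz. assert (y = 0) by lra. subst. reflexivity.
Qed.

Lemma Arg_bound (z : C) : - PI <= Arg z <= PI.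
Proof.
  destruct z as [x y]; unfold Arg; cbn [fst snd Re Im].
  pose proof PI_RGT_0. pose proof (atan_bound (y/x)).
  destruct (Rlt_dec 0 x); [lra|].
  destruct (Rlt_dec x 0).
  - destruct (Rle_dec 0 y).
    + assert (atan (y/x) <= atan 0).
      { destruct (Req_dec y 0). subst. replace (0/x) with 0 by (field; lra). lra.
        left. apply atan_increasing. apply Rdiv_pos_neg; lra. }
      rewrite atan_0 in H1. lra.
    + assert (atan 0 <= atan (y/x)).
      { left. apply atan_increasing. apply Rdiv_neg_neg; lra. }
      rewrite atan_0 in H1. lra.
  - destruct (Rlt_dec 0 y); [lra|]. destruct (Rlt_dec y 0); lra.
Qed.

Lemma Csqrt_sq (z : C) : (Csqrt z * Csqrt z)%C = z.
Proof.
  unfold Csqrt, Cpowp. destruct (Ceq_dec z 0) as [H|H].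
  - subst. apply Ceq; simpl; ring.
  - rewrite <- Cexp_add.
    replace (RtoC (1/2) * Clog z + RtoC (1/2) * Clog z)%C with (Clog z).
    + apply Cexp_Clog; auto.
    + destruct (Clog z) as [p q]. apply Ceq; simpl; field.
Qed.

Lemma Csqrt_re (z : C) : 0 <= Re (Csqrt z).
Proof.
  unfold Csqrt, Cpowp. destruct (Ceq_dec z 0) as [H|H].
  - simpl; lra.
  - unfold Cexp, Clog. cbn [fst snd Re Im Cmult RtoC].
    apply Rmult_le_pos; [left; apply exp_pos|]. apply cos_ge_0;
    pose proof (Arg_bound z); lra.
Qed.

Lemma atan_lip (x y : R) : Rabs (atan x - atan y) <= Rabs (x - y).
Proof.
  destruct (MVT_abs atan (fun t => / (1 + t ^ 2)) y x) as [c [Hc _]].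
  { intros c _. apply derivable_pt_lim_atan. }
  rewrite Hc. rewrite <- (Rmult_1_l (Rabs (x - y))) at 2.
  apply Rmult_le_compat_r; [apply Rabs_pos|].
  assert (0 <= c ^ 2) by (apply pow2_ge_0).
  rewrite Rabs_pos_eq.
  - rewrite <- Rinv_1. apply Rinv_le_contravar; lra.
  - left; apply Rinv_0_lt_compat; lra.
Qed.

Lemma atan_abs_le (t : R) : Rabs (atan t) <= Rabs t.
Proof.
  pose proof (atan_lip t 0). rewrite atan_0 in H. rewrite !Rminus_0_r in H. auto.
Qed.

Lemma tanh_le (a : R) : 0 <= a -> exp a - exp (-a) <= a * (exp a + exp (-a)).
Proof.
  intros Ha. destruct Ha as [Ha|Ha]; [|subst; rewrite Ropp_0; lra].
  set (g := fun x => x * (exp x + exp (-x)) - (exp x - exp (-x))).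
  destruct (MVT_cor2 g (fun x => x * (exp x - exp (-x))) 0 a Ha) as [c [Hc Hc2]].
  { intros c _. unfold g.
    apply is_derive_Reals. auto_derive; auto. ring. }
  unfold g in Hc. rewrite Ropp_0, exp_0 in Hc.
  assert (exp (-c) < exp c) by (apply exp_increasing; lra).
  assert (0 < c * (exp c - exp (- c)) * (a - 0)) by (apply Rmult_lt_0_compat; [apply Rmult_lt_0_compat|]; lra).
  lra.
Qed.

Lemma sh_facts (a : R) : 0 < a ->
  let E := exp a in let sh := (E - / E) / 2 in let ch := (E + / E) / 2 in
  0 < sh /\ ch * ch = sh * sh + 1 /\ sh <= a * ch /\ sh < ch /\ a * (a + 2) <= 2 * sh * (1 + a).
Proof.
  intros Ha E sh ch.
  assert (HE : 1 + a <= E) by apply exp_ineq1_le.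
  assert (HE0 : 0 < E) by (unfold E; apply exp_pos).
  assert (Hinv : exp (-a) = / E) by (unfold E; rewrite exp_Ropp; auto).
  assert (Hi : / E <= / (1 + a)) by (apply Rinv_le_contravar; lra).
  assert (Hi2 : 0 < / E) by (apply Rinv_0_lt_compat; lra).
  assert (HEE : E * / E = 1) by (field; lra).
  assert (Hi1 : / (1+a) * (1 + a) = 1) by (field; lra).
  repeat split.
  - unfold sh. assert (/ (1+a) < 1).
    { rewrite <- Rinv_1. apply Rinv_lt_contravar; lra. }
    lra.
  - unfold ch, sh. nra.
  - pose proof (tanh_le a (Rlt_le _ _ Ha)). rewrite Hinv in H. unfold sh, ch. fold E in H. lra.
  - unfold sh, ch. lra.
  - unfold sh. assert (0 < / (1+a)) by (apply Rinv_0_lt_compat; lra).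
    assert ((E - / E) * (1 + a) >= ((1 + a) - / (1 + a)) * (1 + a)) by nra.
    nra.
Qed.

Lemma ineq_ge1 (a b sh cb sb : R) : 0 < a -> 0 < sh -> a <= sh * (1 + a) ->
  cb * cb + sb * sb = 1 -> b * b * (cb * cb) <= sb * sb ->
  (a * a + b * b) * (sh * sh + cb * cb) <=
  2 * (sh * sh + sb * sb) * ((1 + a) * (1 + a) + b * b).
Proof.
  intros Ha Hsh H1 Hcs Hb.
  assert (H2 : a * a <= sh * sh * ((1 + a) * (1 + a))).
  { replace (sh * sh * ((1 + a) * (1 + a))) with ((sh*(1+a))*(sh*(1+a))) by ring.
    apply Rmult_le_compat; lra. }
  assert (H3 : a * a * (cb * cb) <= a * a) by nra.
  assert (H4 : 0 <= sb * sb) by nra.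
  assert (H5 : 1 <= (1 + a) * (1 + a) + b * b) by nra.
  assert (H6 : (a*a + b*b) * (sh*sh) <= sh * sh * ((1 + a) * (1 + a) + b * b)) by nra.
  assert (H7 : sb * sb <= sb * sb * ((1 + a) * (1 + a) + b * b)) by nra.
  assert (H8 : sh * sh * ((1+a)*(1+a)) <= sh * sh * ((1 + a) * (1 + a) + b * b)) by nra.
  nra.
Qed.

Lemma ineq_lt1 (a b sh ch cb sb cd : R) : 0 < a -> 0 < sh -> sh <= a * ch ->
  ch * ch = sh * sh + 1 -> 0 < cd -> cd <= 1 ->
  cd * (1 + (sh * sh + sb * sb)) <= sh * sh + cb * cb ->
  sb * sb <= b * b ->
  (sh * sh + sb * sb) * ((1 + a) * (1 + a) + b * b) <=
  (2 + 2 / cd) * (sh * sh + cb * cb) * (a * a + b * b).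
Proof.
  intros Ha Hsh Ht Hch Hcd Hcd1 HQ Hsb.
  set (P := sh * sh + sb * sb) in *. set (Q := sh * sh + cb * cb) in *.
  set (ZZ := a * a + b * b).
  assert (HZZ : 0 <= ZZ) by (unfold ZZ; nra).
  assert (HP : 0 <= P) by (unfold P; nra).
  assert (HQ1 : 1 + P <= Q / cd).
  { apply (Rmult_le_reg_l cd); auto. replace (cd * (Q / cd)) with Q by (field; lra). lra. }
  assert (HPZZ : P <= (1 + Q) * ZZ).
  { unfold P, ZZ. assert (sh * sh <= a * a * (ch * ch)) by nra.
    assert (sh * sh <= Q) by (unfold Q; nra). nra. }
  assert (HL : P * ((1 + a) * (1 + a) + b * b) <= 2 * P * (1 + ZZ)).
  { assert (Hx: (1+a)*(1+a)+b*b <= 2*(1+ZZ)) by (unfold ZZ; pose proof (Rle_0_sqr (1-a)); pose proof (Rle_0_sqr b); unfold Rsqr in *; lra).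
    pose proof (Rmult_le_compat_l P _ _ HP Hx). lra. }
  replace ((2 + 2 / cd) * Q * ZZ) with (2 * Q * ZZ + 2 * (Q / cd) * ZZ) by (field; lra).
  nra.
Qed.

Lemma ineq_ge1_real (a sh : R) : 0 < a -> 0 < sh -> a * (a + 2) <= 2 * sh * (1 + a) ->
  (a * a) * (sh * sh + 1) <= (sh * sh) * ((1 + a) * (1 + a)).
Proof.
  intros Ha Hsh H1.
  assert (H2 : (a * (a + 2)) * (a * (a + 2)) <= (2 * sh * (1 + a)) * (2 * sh * (1 + a)))
    by (apply Rmult_le_compat; nra).
  assert (H3 : a * a <= sh * sh * (1 + 2 * a)).
  { assert (H4 : 4 * (1 + a) * (1 + a) * (a * a) <= (a + 2) * (a + 2) * (1 + 2 * a) * (a * a)).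
    { apply Rmult_le_compat_r; nra. }
    assert (H5 : 0 < 4 * (1 + a) * (1 + a)) by nra.
    apply (Rmult_le_reg_l (4 * (1 + a) * (1 + a))); auto.
    assert (H6 : (a + 2) * (a + 2) * (1 + 2 * a) * (a * a) <= 4 * (1 + a) * (1 + a) * (sh * sh * (1 + 2 * a))).
    { replace ((a + 2) * (a + 2) * (1 + 2 * a) * (a * a)) with ((a * (a + 2)) * (a * (a + 2)) * (1 + 2*a)) by ring.
      replace (4 * (1 + a) * (1 + a) * (sh * sh * (1 + 2 * a))) with ((2 * sh * (1 + a)) * (2 * sh * (1 + a)) * (1 + 2*a)) by ring.
      apply Rmult_le_compat_r; lra. }
    lra. }
  nra.
Qed.

Lemma ineq_lt1_real (a sh ch : R) : 0 < a -> 0 < sh -> sh <= a * ch -> sh < ch ->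
  ch * ch = sh * sh + 1 ->
  (sh * sh) * ((1 + a) * (1 + a)) <= 4 * (sh * sh + 1) * (a * a).
Proof.
  intros Ha Hsh Ht Hsc Hch. rewrite <- Hch.
  assert (sh * (1 + a) <= 2 * a * ch).
  { destruct (Rle_dec a 1); nra. }
  nra.
Qed.

Lemma exp_quad (x : R) : Rabs x <= 1 -> Rabs (exp x - 1 - x) <= 3 * (x * x).
Proof.
  intros Hx. pose proof (exp_ineq1_le x).
  rewrite Rabs_pos_eq by lra.
  destruct (Rle_dec x 0) as [Hn|Hp].
  -
    pose proof (exp_ineq1_le (-x)).
    assert (He : exp x * exp (-x) = 1) by (rewrite <- exp_plus; replace (x + -x) with 0 by ring; apply exp_0).
    assert (exp x * (1 - x) <= 1).
    { assert (exp x * (1 - x) <= exp x * exp (-x)). apply Rmult_le_compat_l. left; apply exp_pos. lra. lra. }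
    assert (0 < exp x) by apply exp_pos.
    nra.
  - assert (Hx1 : x <= 1) by (apply Rabs_le_between in Hx; lra).
    pose proof (exp_ineq1_le (-(x/2))).
    assert (He : exp (x/2) * exp (-(x/2)) = 1) by (rewrite <- exp_plus; replace (x/2 + -(x/2)) with 0 by ring; apply exp_0).
    assert (Hh : exp (x/2) * (1 - x/2) <= 1).
    { assert (exp (x/2) * (1 - x/2) <= exp (x/2) * exp (-(x/2))). apply Rmult_le_compat_l. left; apply exp_pos. lra. lra. }
    assert (Hsq : exp x = exp (x/2) * exp (x/2)) by (rewrite <- exp_plus; f_equal; field).
    assert (0 < exp (x/2)) by apply exp_pos.
    set (t := exp (x/2)) in *.
    assert (Ht2 : t * t * ((1 - x/2) * (1 - x/2)) <= 1).
    { assert (0 <= t * (1 - x/2)) by nra.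
      pose proof (Rmult_le_compat _ _ _ _ H2 H2 Hh Hh). nra. }
    assert (HH1 : 1 <= (1 + x + 3 * (x*x)) * ((1 - x/2) * (1 - x/2))) by nra.
    assert (0 < (1 - x/2) * (1 - x/2)) by nra.
    assert (t * t <= 1 + x + 3 * (x*x)) by nra.
    lra.
Qed.

Lemma cos_quad (y : R) : Rabs y <= 1 -> Rabs (cos y - 1) <= y * y / 2.
Proof.
  intros Hy. apply Rabs_le_between in Hy.
  pose proof PI2_1 as HP.
  destruct (cos_bound y 0) as [H1 H2]; try lra.
  unfold cos_approx, cos_term in H1. simpl in H1.
  pose proof (COS_bound y).
  rewrite Rabs_left1 by lra. 
  replace (INR (2 * 1)) with 2 in H1 by (simpl; lra).
  field_simplify in H1. lra.
Qed.

Lemma sin_pos_bound (a : R) : 0 <= a <= 1 -> a - a * a * a / 6 <= sin a <= a.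
Proof.
  intros Ha. pose proof PI2_1.
  destruct (sin_bound a 0) as [H1 H2]; try lra.
  unfold sin_approx, sin_term in H1, H2. simpl in H1, H2.
  replace (INR (2 * 1 + 1)) with 3 in * by (simpl; lra).
  field_simplify in H1. field_simplify in H2. split; [lra|].
  assert (a ^ 5 <= a ^ 3 * 1) by (replace (a^5) with (a^3 * (a*a)) by ring; apply Rmult_le_compat_l; [apply pow_le; lra| nra]).
  assert (0 <= a ^ 3) by (apply pow_le; lra).
  lra.
Qed.

Lemma sin_quad (y : R) : Rabs y <= 1 -> Rabs (sin y - y) <= y * y /\ Rabs (sin y) <= Rabs y.
Proof.
  intros Hy. apply Rabs_le_between in Hy.
  destruct (Rle_dec 0 y).
  - destruct (sin_pos_bound y) as [H1 H2]; [lra|].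
    rewrite (Rabs_pos_eq y) by lra. split.
    + rewrite Rabs_left1 by lra. nra.
    + rewrite Rabs_pos_eq by nra. lra.
  - destruct (sin_pos_bound (-y)) as [H1 H2]; [lra|]. rewrite sin_neg in H1, H2.
    rewrite (Rabs_left y) by lra. split.
    + rewrite Rabs_pos_eq by lra. nra.
    + rewrite Rabs_left1 by nra. lra.
Qed.

Lemma sin_abs_le (x : R) : Rabs (sin x) <= Rabs x.
Proof.
  destruct (MVT_abs sin cos 0 x) as [c [Hc _]].
  { intros c _. apply derivable_pt_lim_sin. }
  rewrite sin_0, !Rminus_0_r in Hc. rewrite Hc.
  pose proof (COS_bound c). assert (Rabs (cos c) <= 1) by (apply Rabs_le; lra).
  pose proof (Rabs_pos x). pose proof (Rabs_pos (cos c)). nra.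
Qed.

Definition Dc (f : C -> C) (z l : C) : Prop :=
  forall eps, 0 < eps -> exists del, 0 < del /\ forall y, Cmod (y - z) < del ->
    Cmod (f y - f z - (y - z) * l)%C <= eps * Cmod (y - z).

Lemma sqrt2_lt_2 : sqrt 2 < 2.
Proof.
  rewrite <- (sqrt_square 2) at 2 by lra. apply sqrt_lt_1; lra.
Qed.

Lemma Dc_is_derive f z l : Dc f z l -> @is_derive C_AbsRing C_NormedModule f z l.
Proof.
  intros H. split.
  - apply is_linear_scal_l.
  - intros x Hx. pose proof (@is_filter_lim_locally_unique C_AbsRing (AbsRing_NormedModule C_AbsRing) _ _ Hx).
    subst x.
    intros eps. destruct (H eps (cond_pos eps)) as [del [Hd Hy]].
    exists (mkposreal del Hd). intros y Hb.
    specialize (Hy y Hb). exact Hy.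
Qed.

Lemma Cmod_le_sum (z : C) : Cmod z <= Rabs (fst z) + Rabs (snd z).
Proof.
  destruct z as [a b]; unfold Cmod; cbn [fst snd].
  pose proof (Rabs_pos a); pose proof (Rabs_pos b).
  rewrite <- (sqrt_square (Rabs a + Rabs b)) by lra.
  apply sqrt_le_1_alt.
  replace (a ^ 2) with (Rabs a * Rabs a) by (rewrite <- Rabs_mult; rewrite Rabs_pos_eq; [ring| nra]).
  replace (b ^ 2) with (Rabs b * Rabs b) by (rewrite <- Rabs_mult; rewrite Rabs_pos_eq; [ring| nra]).
  nra.
Qed.

Lemma Cmod_sq (z : C) : Cmod z * Cmod z = fst z * fst z + snd z * snd z.
Proof.
  destruct z as [a b]; unfold Cmod; cbn [fst snd].
  rewrite sqrt_sqrt by nra. ring.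
Qed.

Lemma Cexp_quad (k : C) : Cmod k <= 1 ->
  Cmod (Cexp k - 1 - k)%C <= 8 * (Cmod k * Cmod k).
Proof.
  intros Hk. rewrite Cmod_sq.
  pose proof (Rmax_Cmod k) as Hm.
  destruct k as [x y]. cbn [fst snd] in *.
  assert (Hx : Rabs x <= 1) by (pose proof (Rmax_l (Rabs x) (Rabs y)); lra).
  assert (Hy : Rabs y <= 1) by (pose proof (Rmax_r (Rabs x) (Rabs y)); lra).
  eapply Rle_trans; [apply Cmod_le_sum|].
  unfold Cexp; cbn [fst snd Re Im Cminus Cplus Copp RtoC].
  pose proof (exp_quad x Hx) as E1. pose proof (cos_quad y Hy) as E2.
  destruct (sin_quad y Hy) as [E3 E4].
  pose proof (COS_bound y).
  assert (R1 : Rabs (exp x * cos y + - (1) + - x) <= 3 * (x*x) + y * y).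
  { replace (exp x * cos y + - (1) + - x) with ((exp x - 1 - x) * cos y + (1 + x) * (cos y - 1)) by ring.
    eapply Rle_trans; [apply Rabs_triang|]. rewrite !Rabs_mult.
    assert (Rabs (cos y) <= 1) by (apply Rabs_le; lra).
    assert (Rabs (1 + x) <= 2) by (apply Rabs_le; apply Rabs_le_between in Hx; lra).
    pose proof (Rabs_pos (exp x - 1 - x)). pose proof (Rabs_pos (cos y - 1)).
    pose proof (Rabs_pos (1+x)). pose proof (Rabs_pos (cos y)).
    assert (Rabs (exp x - 1 - x) * Rabs (cos y) <= 3 * (x * x) * 1) by (apply Rmult_le_compat; lra).
    assert (Rabs (1 + x) * Rabs (cos y - 1) <= 2 * (y * y / 2)) by (apply Rmult_le_compat; lra).
    lra. }
  assert (R2 : Rabs (exp x * sin y + - 0 + - y) <= 4 * (x * x) + 2 * (y * y)).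
  { replace (exp x * sin y + - 0 + - y) with ((exp x - 1 - x) * sin y + x * sin y + (sin y - y)) by ring.
    eapply Rle_trans; [apply Rabs_triang|].
    eapply Rle_trans; [apply Rplus_le_compat_r; apply Rabs_triang|].
    rewrite !Rabs_mult.
    pose proof (Rabs_pos (exp x - 1 - x)). pose proof (Rabs_pos (sin y)).
    pose proof (Rabs_pos x). pose proof (Rabs_pos y).
    assert (Rabs (exp x - 1 - x) * Rabs (sin y) <= 3 * (x * x) * 1) by (apply Rmult_le_compat; lra).
    assert (Rabs x * Rabs (sin y) <= Rabs x * Rabs y) by (apply Rmult_le_compat_l; lra).
    assert (Rabs x * Rabs y <= (x * x + y * y)/2).
    { replace (x*x) with (Rabs x * Rabs x) by (rewrite <- Rabs_mult, Rabs_pos_eq; nra).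
      replace (y*y) with (Rabs y * Rabs y) by (rewrite <- Rabs_mult, Rabs_pos_eq; nra).
      pose proof (Rle_0_sqr (Rabs x - Rabs y)). unfold Rsqr in *. lra. }
    nra. }
  eapply Rle_trans; [apply Rplus_le_compat; [exact R1|exact R2]|]. nra.
Qed.

Lemma Dc_Cexp (z : C) : Dc Cexp z (Cexp z).
Proof.
  intros eps Heps.
  pose proof (Cmod_pos _ (Cexp_neq0 z)) as Hz.
  set (M := Cmod (Cexp z)) in *.
  exists (Rmin 1 (eps / (8 * M))). split.
  { apply Rmin_pos; [lra|]. apply Rdiv_lt_0_compat; lra. }
  intros y Hy.
  assert (Hy1 : Cmod (y - z) <= 1) by (pose proof (Rmin_l 1 (eps / (8 * M))); lra).
  assert (Hy2 : Cmod (y - z) <= eps / (8 * M)) by (pose proof (Rmin_r 1 (eps / (8 * M))); lra).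
  replace (Cexp y - Cexp z - (y - z) * Cexp z)%C with (Cexp z * (Cexp (y - z) - 1 - (y - z)))%C.
  2:{ assert (HE : Cexp y = (Cexp z * Cexp (y - z))%C) by (rewrite <- Cexp_add; f_equal; ring).
       rewrite HE. ring. }
  rewrite Cmod_mult. fold M.
  pose proof (Cexp_quad (y - z) Hy1). pose proof (Cmod_ge_0 (y - z)).
  assert (M * (8 * (Cmod (y - z) * Cmod (y - z))) <= eps * Cmod (y - z)).
  { assert (8 * M * Cmod (y - z) <= eps).
    { apply (Rmult_le_compat_l (8 * M)) in Hy2; [|lra].
      replace (8 * M * (eps / (8 * M))) with eps in Hy2 by (field; lra). lra. }
    nra. }
  eapply Rle_trans; [|exact H1]. apply Rmult_le_compat_l; lra.
Qed.

Lemma Dc_Cinv (z : C) : z <> 0%C -> Dc (fun y => / y)%C z (- / (z * z))%C.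
Proof.
  intros Hz0 eps Heps.
  pose proof (Cmod_pos _ Hz0) as Hz. set (M := Cmod z) in *.
  exists (Rmin (M / 2) (eps * M * M * M / 2)). split.
  { apply Rmin_pos; [lra|]. assert (0 < eps * M * M * M) by (repeat apply Rmult_lt_0_compat; lra). lra. }
  intros y Hy.
  assert (Hy1 : Cmod (y - z) <= M / 2) by (pose proof (Rmin_l (M/2) (eps * M * M * M / 2)); lra).
  assert (Hy2 : Cmod (y - z) <= eps * M * M * M / 2) by (pose proof (Rmin_r (M/2) (eps * M * M * M / 2)); lra).
  assert (HyM : M / 2 <= Cmod y).
  { pose proof (Cmod_triangle y (z - y)). replace (y + (z - y))%C with z in H by ring.
    rewrite <- (Cmod_opp (z - y)) in H. replace (- (z - y))%C with (y - z)%C in H by ring. fold M in H. lra. }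
  assert (Hy0 : y <> 0%C). { intro. subst. rewrite Cmod_0 in HyM. lra. }
  replace (/ y - / z - (y - z) * - / (z * z))%C with ((y - z) * (y - z) / (z * z * y))%C by (field; auto).
  rewrite Cmod_div by (repeat apply Cmult_neq_0; auto).
  rewrite !Cmod_mult. fold M. pose proof (Cmod_ge_0 (y - z)).
  apply (Rmult_le_reg_r (M * M * Cmod y)). { repeat apply Rmult_lt_0_compat; lra. }
  unfold Rdiv. rewrite Rmult_assoc, Rinv_l by (assert (0 < M * M * Cmod y) by (repeat apply Rmult_lt_0_compat; lra); lra).
  assert (M * M * (M / 2) <= M * M * Cmod y) by (apply Rmult_le_compat_l; nra).
  assert (Cmod (y - z) * 2 <= eps * M * M * M) by lra.
  assert (H2 : eps * (M * M * (M / 2)) <= eps * (M * M * Cmod y)) by (apply Rmult_le_compat_l; lra).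
  assert (H3 : Cmod (y - z) <= eps * (M * M * Cmod y)) by lra.
  pose proof (Rmult_le_compat_l _ _ _ H H3). lra.
Qed.

Lemma Cmod_ge_re (z : C) : Re z <= Cmod z.
Proof. pose proof (re_le_Cmod z). pose proof (Rle_abs (Re z)). lra. Qed.

Lemma Dc_Csqrt (v : C) : 0 < Re (Csqrt v) -> Dc Csqrt v (/ (2 * Csqrt v))%C.
Proof.
  intros Hr eps Heps. set (r := Re (Csqrt v)) in *.
  exists (2 * r * r * r * eps). split.
  { repeat apply Rmult_lt_0_compat; lra. }
  intros y Hy.
  set (Sy := Csqrt y). set (Sv := Csqrt v).
  assert (HSy : 0 <= Re Sy) by apply Csqrt_re.
  assert (Hsum : r <= Cmod (Sy + Sv)).
  { eapply Rle_trans; [|apply Cmod_ge_re]. change (Re (Sy + Sv)%C) with (Re Sy + r). lra. }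
  assert (Hsum0 : (Sy + Sv)%C <> 0%C) by (intro H; rewrite H, Cmod_0 in Hsum; lra).
  assert (HSv : r <= Cmod Sv) by apply Cmod_ge_re.
  assert (HSv0 : Sv <> 0%C) by (intro H; rewrite H, Cmod_0 in HSv; lra).
  assert (Hid : (Sy - Sv)%C = ((y - v) / (Sy + Sv))%C).
  { assert (Sy * Sy = y)%C by apply Csqrt_sq. assert (Sv * Sv = v)%C by apply Csqrt_sq.
    rewrite <- H, <- H0. field. auto. }
  replace (Sy - Sv - (y - v) * / (2 * Sv))%C with ((y - v) * (Sv - Sy) / ((Sy + Sv) * (2 * Sv)))%C.
  2:{ rewrite Hid. field. repeat split; auto; intro H; injection H; lra. }
  assert (HSd : Cmod (Sv - Sy) <= Cmod (y - v) / r).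
  { replace (Sv - Sy)%C with (- (Sy - Sv))%C by ring. rewrite Cmod_opp, Hid, Cmod_div by auto.
    apply Rmult_le_compat_l; [apply Cmod_ge_0|]. apply Rinv_le_contravar; lra. }
  rewrite Cmod_div by (apply Cmult_neq_0; auto; apply Cmult_neq_0; auto; intro H; injection H; lra).
  rewrite !Cmod_mult.
  assert (H2 : Cmod 2 = 2) by (rewrite Cmod_R; apply Rabs_pos_eq; lra). rewrite H2.
  pose proof (Cmod_ge_0 (y - v)) as Hd.
  assert (Hden : r * (2 * r) <= Cmod (Sy + Sv) * (2 * Cmod Sv)) by (apply Rmult_le_compat; lra).
  assert (Hnum : Cmod (y - v) * Cmod (Sv - Sy) <= Cmod (y - v) * (Cmod (y - v) / r))
    by (apply Rmult_le_compat_l; auto).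
  apply Rle_trans with (Cmod (y - v) * (Cmod (y - v) / r) / (r * (2 * r))).
  - unfold Rdiv at 1 3. apply Rmult_le_compat; try lra.
    + apply Rmult_le_pos; [auto| apply Cmod_ge_0].
    + left; apply Rinv_0_lt_compat. assert (0 < r * (2 * r)) by nra. nra.
    + apply Rinv_le_contravar; [nra|lra].
  - replace (Cmod (y - v) * (Cmod (y - v) / r) / (r * (2 * r))) with
      (Cmod (y - v) * (Cmod (y - v) / (2 * r * r * r))) by (field; lra).
    rewrite Rmult_comm. apply Rmult_le_compat_r; auto.
    apply (Rmult_le_reg_r (2 * r * r * r)); [repeat apply Rmult_lt_0_compat; lra|].
    unfold Rdiv. rewrite Rmult_assoc, Rinv_l by (assert (0 < 2 * r * r * r) by (repeat apply Rmult_lt_0_compat; lra); lra).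
    lra.
Qed.

Lemma ln_le_m1 (x : R) : 0 < x -> ln x <= x - 1.
Proof. intros. pose proof (exp_ineq1_le (ln x)). rewrite exp_ln in H0 by auto. lra. Qed.

Lemma ln_lip (a b : R) : 0 < a -> 0 < b -> b / 2 <= a -> Rabs (ln a - ln b) <= 2 * Rabs (a - b) / b.
Proof.
  intros Ha Hb Hab.
  assert (H1 : ln a - ln b <= (a - b) / b).
  { rewrite <- ln_div by auto. pose proof (ln_le_m1 (a / b)).
    replace ((a - b) / b) with (a / b - 1) by (field; lra). apply H. apply Rdiv_lt_0_compat; auto. }
  assert (H2 : ln b - ln a <= (b - a) / a).
  { rewrite <- ln_div by auto. pose proof (ln_le_m1 (b / a)).
    replace ((b - a) / a) with (b / a - 1) by (field; lra). apply H. apply Rdiv_lt_0_compat; auto. }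
  assert (H3 : (b - a) / a <= 2 * Rabs (a - b) / b).
  { apply (Rmult_le_reg_r (a * b)); [nra|].
    replace ((b - a) / a * (a * b)) with ((b - a) * b) by (field; lra).
    replace (2 * Rabs (a - b) / b * (a * b)) with (2 * a * Rabs (a - b)) by (field; lra).
    pose proof (Rle_abs (b - a)). rewrite Rabs_minus_sym in H. pose proof (Rabs_pos (a - b)).
    apply Rle_trans with (Rabs (a - b) * b). nra. nra. }
  assert (H4 : (a - b) / b <= 2 * Rabs (a - b) / b).
  { unfold Rdiv. apply Rmult_le_compat_r. left; apply Rinv_0_lt_compat; auto.
    pose proof (Rle_abs (a - b)). pose proof (Rabs_pos (a - b)). lra. }
  apply Rabs_le. lra.
Qed.

Lemma Cmod_fst_le (z : C) : Rabs (fst z) <= Cmod z.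
Proof. pose proof (Rmax_Cmod z). pose proof (Rmax_l (Rabs (fst z)) (Rabs (snd z))). lra. Qed.
Lemma Cmod_snd_le (z : C) : Rabs (snd z) <= Cmod z.
Proof. pose proof (Rmax_Cmod z). pose proof (Rmax_r (Rabs (fst z)) (Rabs (snd z))). lra. Qed.

Lemma Cmod_tri_diff (y u : C) : Rabs (Cmod y - Cmod u) <= Cmod (y - u).
Proof.
  apply Rabs_le. split.
  - pose proof (Cmod_triangle y (u - y)). replace (y + (u - y))%C with u in H by ring.
    rewrite <- (Cmod_opp (u - y)) in H. replace (- (u - y))%C with (y - u)%C in H by ring. lra.
  - pose proof (Cmod_triangle u (y - u)). replace (u + (y - u))%C with y in H by ring. lra.
Qed.

Lemma Clog_lip (u : C) : 0 < Re u -> exists M d0, 0 < M /\ 0 < d0 /\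
  forall y, Cmod (y - u) < d0 -> 0 < Re y /\ Cmod (Clog y - Clog u)%C <= M * Cmod (y - u).
Proof.
  intros Hu. destruct u as [u1 u2]. simpl in Hu.
  assert (HB : 0 < Cmod (u1, u2)) by (eapply Rlt_le_trans; [exact Hu| apply (Cmod_ge_re (u1,u2))]).
  set (B := Cmod (u1, u2)) in *.
  exists (2 / B + 2 * (u1 + Rabs u2) / (u1 * u1)), (Rmin (u1 / 2) (B / 2)).
  split; [|split].
  - assert (0 < 2 / B) by (apply Rdiv_lt_0_compat; lra).
    assert (0 <= 2 * (u1 + Rabs u2) / (u1 * u1)).
    { apply Rmult_le_pos; [pose proof (Rabs_pos u2); lra|]. left; apply Rinv_0_lt_compat; nra. }
    lra.
  - apply Rmin_pos; lra.
  - intros [y1 y2] Hy.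
    assert (Hd1 : Cmod ((y1, y2) - (u1, u2))%C <= u1 / 2) by (pose proof (Rmin_l (u1/2) (B/2)); lra).
    assert (Hd2 : Cmod ((y1, y2) - (u1, u2))%C <= B / 2) by (pose proof (Rmin_r (u1/2) (B/2)); lra).
    set (d := Cmod ((y1, y2) - (u1, u2))%C) in *.
    assert (E1 : Rabs (y1 - u1) <= d) by (apply (Cmod_fst_le ((y1, y2) - (u1, u2))%C)).
    assert (E2 : Rabs (y2 - u2) <= d) by (apply (Cmod_snd_le ((y1, y2) - (u1, u2))%C)).
    assert (Hy1 : u1 / 2 <= y1) by (apply Rabs_le_between in E1; lra).
    split; [simpl; lra|].
    assert (Hc : Rabs (Cmod (y1, y2) - B) <= d) by apply Cmod_tri_diff.
    assert (HA : B / 2 <= Cmod (y1, y2)) by (apply Rabs_le_between in Hc; lra).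
    eapply Rle_trans; [apply Cmod_le_sum|].
    unfold Clog, Arg; cbn [fst snd Re Im Cminus Cplus Copp].
    destruct (Rlt_dec 0 y1); [|lra]. destruct (Rlt_dec 0 u1); [|lra].
    replace (ln (Cmod (y1, y2)) + - ln B) with (ln (Cmod (y1, y2)) - ln B) by ring.
    replace (atan (y2 / y1) + - atan (u2 / u1)) with (atan (y2 / y1) - atan (u2 / u1)) by ring.
    pose proof (ln_lip (Cmod (y1, y2)) B ltac:(lra) HB HA) as L1.
    pose proof (atan_lip (y2 / y1) (u2 / u1)) as L2.
    assert (L3 : Rabs (y2 / y1 - u2 / u1) <= 2 * (u1 + Rabs u2) / (u1 * u1) * d).
    { replace (y2 / y1 - u2 / u1) with (((y2 - u2) * u1 - u2 * (y1 - u1)) / (y1 * u1)) by (field; lra).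
      rewrite Rabs_div, (Rabs_pos_eq (y1 * u1)) by nra.
      assert (N : Rabs ((y2 - u2) * u1 - u2 * (y1 - u1)) <= (u1 + Rabs u2) * d).
      { unfold Rminus at 1. eapply Rle_trans; [apply Rabs_triang|]. rewrite Rabs_Ropp, !Rabs_mult.
        rewrite (Rabs_pos_eq u1) by lra. pose proof (Rabs_pos u2).
        pose proof (Rmult_le_compat_r u1 _ _ (Rlt_le _ _ Hu) E2).
        pose proof (Rmult_le_compat_l (Rabs u2) _ _ H E1). nra. }
      apply Rle_trans with ((u1 + Rabs u2) * d / (y1 * u1)).
      { unfold Rdiv. apply Rmult_le_compat_r; auto. left; apply Rinv_0_lt_compat; nra. }
      apply (Rmult_le_reg_r (y1 * u1)); [nra|].
      replace ((u1 + Rabs u2) * d / (y1 * u1) * (y1 * u1)) with ((u1 + Rabs u2) * d) by (field; lra).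
      replace (2 * (u1 + Rabs u2) / (u1 * u1) * d * (y1 * u1)) with ((u1 + Rabs u2) * d * (2 * y1 / u1)) by (field; lra).
      assert (1 <= 2 * y1 / u1).
      { apply (Rmult_le_reg_r u1); auto. replace (2 * y1 / u1 * u1) with (2 * y1) by (field; lra). lra. }
      assert (0 <= (u1 + Rabs u2) * d).
      { apply Rmult_le_pos; [pose proof (Rabs_pos u2); lra|]. unfold d; apply Cmod_ge_0. }
      nra. }
    assert (L4 : 2 * Rabs (Cmod (y1, y2) - B) / B <= 2 / B * d).
    { unfold Rdiv. assert (0 < / B) by (apply Rinv_0_lt_compat; auto). nra. }
    assert (Rabs (atan (y2 / y1) - atan (u2 / u1)) <= 2 * (u1 + Rabs u2) / (u1 * u1) * d) by lra.
    fold B. assert (L5 : Rabs (ln (Cmod (y1,y2)) + - ln B) <= 2/B*d) by (change (ln (Cmod (y1,y2)) + - ln B) with (ln (Cmod (y1,y2)) - ln B); lra). nra.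
Qed.

Lemma re_pos_neq0 (z : C) : 0 < Re z -> z <> 0%C.
Proof. intros H E. subst. simpl in H. lra. Qed.

Lemma Dc_Clog (u : C) : 0 < Re u -> Dc Clog u (/ u)%C.
Proof.
  intros Hu. destruct (Clog_lip u Hu) as [M [d0 [HM [Hd0 HL]]]].
  intros eps Heps.
  exists (Rmin d0 (Rmin (/ M) (eps / (8 * M * M)))). split.
  { apply Rmin_pos; auto. apply Rmin_pos. apply Rinv_0_lt_compat; auto.
    apply Rdiv_lt_0_compat; auto. nra. }
  intros y Hy.
  assert (Hy0 : Cmod (y - u) < d0) by (pose proof (Rmin_l d0 (Rmin (/ M) (eps / (8 * M * M)))); lra).
  assert (Hy1 : Cmod (y - u) <= / M) by (pose proof (Rmin_r d0 (Rmin (/ M) (eps / (8 * M * M)))); pose proof (Rmin_l (/ M) (eps / (8 * M * M))); lra).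
  assert (Hy2 : Cmod (y - u) <= eps / (8 * M * M)) by (pose proof (Rmin_r d0 (Rmin (/ M) (eps / (8 * M * M)))); pose proof (Rmin_r (/ M) (eps / (8 * M * M))); lra).
  destruct (HL y Hy0) as [Hyre Hk].
  set (k := (Clog y - Clog u)%C) in *.
  set (d := Cmod (y - u)) in *.
  assert (Hd : 0 <= d) by apply Cmod_ge_0.
  assert (Hk1 : Cmod k <= 1).
  { apply Rle_trans with (M * d); auto. apply (Rmult_le_compat_l M) in Hy1; [|lra].
    rewrite Rinv_r in Hy1 by lra. lra. }
  assert (HE : Cexp k = (y / u)%C).
  { assert (Cexp (Clog y) = (Cexp k * Cexp (Clog u))%C) by (rewrite <- Cexp_add; f_equal; unfold k; ring).
    rewrite !Cexp_Clog in H by (apply re_pos_neq0; auto). rewrite H. field. apply re_pos_neq0; auto. }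
  replace (k - (y - u) * / u)%C with (- (Cexp k - 1 - k))%C.
  2:{ rewrite HE. field. apply re_pos_neq0; auto. }
  rewrite Cmod_opp. eapply Rle_trans; [apply Cexp_quad; auto|].
  assert (Cmod k * Cmod k <= (M * d) * (M * d)) by (apply Rmult_le_compat; auto; apply Cmod_ge_0).
  assert (8 * M * M * d <= eps).
  { apply (Rmult_le_compat_l (8 * M * M)) in Hy2; [|nra].
    replace (8 * M * M * (eps / (8 * M * M))) with eps in Hy2 by (field; lra). lra. }
  assert (8 * (M * d * (M * d)) <= eps * d) by nra.
  lra.
Qed.

Lemma sqrt_re_pos (w : C) : 0 < Re w -> 0 < Re (Csqrt (w * w + 1)).
Proof.
  intros Hw. pose proof (Csqrt_re (w * w + 1)) as H0.
  destruct H0 as [H0|H0]; auto. exfalso.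
  pose proof (Csqrt_sq (w * w + 1)) as Hs.
  destruct (Csqrt (w * w + 1)) as [s1 s2]. destruct w as [w1 w2].
  simpl in H0, Hw. subst s1.
  assert (E1 := f_equal fst Hs). assert (E2 := f_equal snd Hs). simpl in E1, E2.
  assert (w2 = 0) by nra. subst. nra.
Qed.

Lemma ws_facts (w s : C) : 0 < Re w -> 0 < Re s -> (s * s)%C = (w * w + 1)%C ->
  0 < Re (w + s) /\ 1 < Cmod (w + s) /\ Cmod s <= Cmod (w + s) /\ ((s - w) * (w + s))%C = 1%C
  /\ (Im w = 0 -> Im s = 0).
Proof.
  intros Hw Hs Hsq. destruct w as [w1 w2], s as [s1 s2]. simpl in Hw, Hs.
  assert (E1 := f_equal fst Hsq). assert (E2 := f_equal snd Hsq). simpl in E1, E2.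
  assert (Hp : s1 * s2 = w1 * w2) by lra.
  assert (Hpp : 0 <= w2 * s2).
  { assert (0 <= (w2 * s2) * (w1 * s1)) by (replace ((w2 * s2) * (w1 * s1)) with ((w1 * w2) * (s1 * s2)) by ring; rewrite Hp; nra).
    assert (0 < w1 * s1) by nra. nra. }
  set (p := w1 * s1 + w2 * s2).
  assert (Hp0 : 0 < p) by (unfold p; nra).
  assert (Hq : (((s1, s2) - (w1, w2)) * ((w1, w2) + (s1, s2)))%C = 1%C).
  { apply Ceq; simpl; lra. }
  assert (HA : Cmod ((w1, w2) + (s1, s2))%C * Cmod ((w1, w2) + (s1, s2))%C = w1*w1+w2*w2 + (s1*s1+s2*s2) + 2 * p)
    by (rewrite Cmod_sq; simpl; unfold p; ring).
  assert (HB : Cmod ((s1, s2) - (w1, w2))%C * Cmod ((s1, s2) - (w1, w2))%C = w1*w1+w2*w2 + (s1*s1+s2*s2) - 2 * p)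
    by (rewrite Cmod_sq; simpl; unfold p; ring).
  assert (HC : Cmod ((s1, s2) - (w1, w2))%C * Cmod ((w1, w2) + (s1, s2))%C = 1)
    by (rewrite <- Cmod_mult, Hq; apply Cmod_1).
  pose proof (Cmod_ge_0 ((w1, w2) + (s1, s2))%C). pose proof (Cmod_ge_0 ((s1, s2) - (w1, w2))%C).
  repeat split.
  - simpl; lra.
  - nra.
  - assert (Cmod (s1, s2) * Cmod (s1, s2) <= Cmod ((w1, w2) + (s1, s2))%C * Cmod ((w1, w2) + (s1, s2))%C)
      by (rewrite HA, Cmod_sq; simpl; nra).
    pose proof (Cmod_ge_0 (s1, s2)). nra.
  - exact Hq.
  - simpl. intro. subst. nra.
Qed.

Lemma Cexp_2 (z : C) : Cexp (2 * z)%C = (Cexp z * Cexp z)%C.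
Proof. rewrite <- Cexp_add. f_equal. destruct z. apply Ceq; simpl; ring. Qed.

Lemma Cexp_m2 (z : C) : Cexp (- (2 * z))%C = (/ (Cexp z * Cexp z))%C.
Proof.
  assert (H : (Cexp (- (2 * z)) * Cexp (2 * z))%C = 1%C).
  { rewrite <- Cexp_add. replace (- (2 * z) + 2 * z)%C with (RtoC 0) by ring. apply Cexp_0. }
  rewrite Cexp_2 in H. assert (Cexp z * Cexp z <> 0)%C by (apply Cmult_neq_0; apply Cexp_neq0).
  transitivity (Cexp (-(2*z)) * (Cexp z * Cexp z) * / (Cexp z * Cexp z))%C; [field; auto | rewrite H; ring]. apply Cexp_neq0.
Qed.

Lemma decomp (q1 q2 u1 u2 E cb sb : R) : 0 < E -> cb * cb + sb * sb = 1 ->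
  u1 = E * cb -> u2 = E * sb -> q1 * u1 - q2 * u2 = 1 -> q1 * u2 + q2 * u1 = 0 ->
  q1 = cb / E /\ q2 = - sb / E.
Proof.
  intros HE Hcs H1 H2 H3 H4. subst.
  assert (A1 : q1 * E = cb).
  { transitivity (cb * (q1 * (E * cb) - q2 * (E * sb)) + sb * (q1 * (E * sb) + q2 * (E * cb))).
    - transitivity (q1 * E * (cb * cb + sb * sb)); [rewrite Hcs; ring| ring].
    - rewrite H3, H4. ring. }
  assert (A2 : q2 * E = - sb).
  { transitivity (- sb * (q1 * (E * cb) - q2 * (E * sb)) + cb * (q1 * (E * sb) + q2 * (E * cb))).
    - transitivity (q2 * E * (cb * cb + sb * sb)); [rewrite Hcs; ring| ring].
    - rewrite H3, H4. ring. }
  split; [rewrite <- A1 | rewrite <- A2]; field; lra.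
Qed.

Lemma point_facts (d : R) (zeta : C) : 0 < d -> d < PI / 2 -> strip d zeta ->
  let w := Cexp zeta in let s := Csqrt (w * w + 1) in
  let a := Re (psi zeta) in let b := Im (psi zeta) in
  let E := exp a in let sh := (E - / E) / 2 in let cb := cos b in let sb := sin b in
  0 < a /\ Cmod w * Cmod w = sh * sh + sb * sb /\ Cmod s * Cmod s = sh * sh + cb * cb /\
  b * b * (cb * cb) <= sb * sb /\ cb * cb + sb * sb = 1 /\ sb * sb <= b * b /\
  cos d * (1 + Cmod w * Cmod w) <= Cmod s * Cmod s /\ Cmod s <= E /\
  dpsi zeta = (w / s)%C /\
  Cmod (1 + Cexp (2 * zeta))%C = Cmod s * Cmod s /\
  Cmod (1 + Cexp (- (2 * zeta)))%C = (Cmod s * Cmod s) / (Cmod w * Cmod w) /\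
  (Im zeta = 0 -> b = 0) /\ 0 < Cmod s /\ 0 < Cmod w.
Proof.
  intros Hd Hd2 Hz w s a b E sh cb sb.
  destruct zeta as [x y]. unfold strip in Hz; simpl in Hz.
  assert (Hcy : 0 < cos y) by (apply cos_gt_0; apply Rabs_def2 in Hz; lra).
  assert (Hw : 0 < Re w) by (unfold w, Cexp; simpl; apply Rmult_lt_0_compat; [apply exp_pos|auto]).
  assert (Hs : 0 < Re s) by (apply sqrt_re_pos; auto).
  assert (Hsq : (s * s)%C = (w * w + 1)%C) by apply Csqrt_sq.
  destruct (ws_facts w s Hw Hs Hsq) as [Hu [Hu1 [Hsu [Hq Him]]]].
  set (u := (w + s)%C) in *.
  assert (Hpsi : psi (x, y) = Clog u) by reflexivity.
  assert (Hu0 : u <> 0%C) by (apply re_pos_neq0; auto).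
  assert (HE : E = Cmod u) by (unfold E, a; rewrite Hpsi; simpl; apply exp_ln; lra).
  assert (Hb : b = atan (Im u / Re u)).
  { unfold b. rewrite Hpsi. change (Im (Clog u)) with (Arg u). unfold Arg. cbv zeta.
    destruct (Rlt_dec 0 (Re u)); [reflexivity|lra]. }
  assert (Hcs : cb * cb + sb * sb = 1) by (unfold cb, sb; pose proof (sin2_cos2 b); unfold Rsqr in *; lra).
  assert (HuE : u = (E * cb, E * sb)).
  { rewrite <- (Cexp_Clog u) at 1 by auto. unfold Cexp. rewrite <- Hpsi. fold a b. reflexivity. }
  assert (HE0 : 0 < E) by (unfold E; apply exp_pos).
  set (q := (s - w)%C) in *.
  destruct (decomp (fst q) (snd q) (fst u) (snd u) E cb sb HE0 Hcs)
    as [Hq1 Hq2].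
  { rewrite HuE; reflexivity. } { rewrite HuE; reflexivity. }
  { pose proof (f_equal fst Hq) as E1. change (fst q * fst u - snd q * snd u = 1) in E1. exact E1. }
  { pose proof (f_equal snd Hq) as E1. change (fst q * snd u + snd q * fst u = 0) in E1. exact E1. }
  assert (Hw1 : fst w = (fst u - fst q) / 2) by (unfold u, q; simpl; field).
  assert (Hw2 : snd w = (snd u - snd q) / 2) by (unfold u, q; simpl; field).
  assert (Hs1 : fst s = (fst u + fst q) / 2) by (unfold u, q; simpl; field).
  assert (Hs2 : snd s = (snd u + snd q) / 2) by (unfold u, q; simpl; field).
  assert (Hwdef : w = Cexp (x, y)) by reflexivity.
  assert (Hsdef : s = Csqrt (w * w + 1)) by reflexivity.
  assert (Hudef : u = (w + s)%C) by reflexivity.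
  assert (Hqdef : q = (s - w)%C) by reflexivity.
  clearbody q u s w.
  rewrite HuE in Hw1, Hw2, Hs1, Hs2. cbn [fst snd] in Hw1, Hw2, Hs1, Hs2.
  rewrite Hq1 in Hw1, Hs1. rewrite Hq2 in Hw2, Hs2.
  assert (Hch : ((E + / E) / 2) * ((E + / E) / 2) = sh * sh + 1) by (unfold sh; field; lra).
  assert (HP : Cmod w * Cmod w = sh * sh + sb * sb).
  { rewrite Cmod_sq, Hw1, Hw2.
    transitivity (sh * sh + sb * sb + sh * sh * (cb * cb + sb * sb - 1)).
    - unfold sh. field. lra.
    - rewrite Hcs. ring. }
  assert (HQ : Cmod s * Cmod s = sh * sh + cb * cb).
  { rewrite Cmod_sq, Hs1, Hs2.
    transitivity (sh * sh + cb * cb + sh * sh * (cb * cb + sb * sb - 1)).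
    - unfold sh. field. lra.
    - rewrite Hcs. ring. }
  assert (Hs0 : 0 < Cmod s) by (eapply Rlt_le_trans; [exact Hs| apply Cmod_ge_re]).
  assert (Hw0 : 0 < Cmod w) by (eapply Rlt_le_trans; [exact Hw| apply Cmod_ge_re]).
  assert (Hww : (w * w)%C <> 0%C) by (apply Cmult_neq_0; apply re_pos_neq0; auto).
  assert (HSS : Cmod (w * w + 1)%C = Cmod s * Cmod s) by (rewrite <- Hsq, Cmod_mult; reflexivity).
  set (t := Im u / Re u) in *.
  assert (Hsbt : sb = t * cb).
  { unfold sb, cb. rewrite Hb, sin_atan, cos_atan. field.
    apply Rgt_not_eq. apply sqrt_lt_R0. pose proof (Rle_0_sqr t). lra. }
  repeat split.
  - assert (1 < exp a) by (fold E; lra). rewrite <- exp_0 in H.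
    apply exp_lt_inv in H. exact H.
  - exact HP.
  - exact HQ.
  - rewrite Hsbt. pose proof (atan_abs_le t). rewrite <- Hb in H.
    assert (b * b <= t * t).
    {
      replace (b * b) with (Rabs b * Rabs b) by (rewrite <- Rabs_mult; apply Rabs_pos_eq; nra).
      replace (t * t) with (Rabs t * Rabs t) by (rewrite <- Rabs_mult; apply Rabs_pos_eq; nra).
      apply Rmult_le_compat; auto; apply Rabs_pos. }
    assert (0 <= cb * cb) by nra. nra.
  - exact Hcs.
  - pose proof (sin_abs_le b). fold sb in H.
    replace (b * b) with (Rabs b * Rabs b) by (rewrite <- Rabs_mult; apply Rabs_pos_eq; nra).
    replace (sb * sb) with (Rabs sb * Rabs sb) by (rewrite <- Rabs_mult; apply Rabs_pos_eq; nra).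
    apply Rmult_le_compat; auto; apply Rabs_pos.
  -
    rewrite <- HSS.
    assert (Hcd : cos d <= cos y).
    { apply Rabs_def2 in Hz. pose proof PI2_Rlt_PI. destruct (Rle_dec 0 y).
      - apply cos_decr_1; lra.
      - rewrite <- (cos_neg y). apply cos_decr_1; lra. }
    assert (Hwm : Cmod w * Cmod w = exp x * exp x).
    { rewrite Hwdef, Cmod_Cexp. reflexivity. }
    rewrite Hwm.
    assert (Hlow : cos y * (1 + exp x * exp x) <= Cmod (w * w + 1)%C).
    { rewrite Hwdef. unfold Cexp. change (Re (x, y)) with x. change (Im (x, y)) with y.
      set (c := cos y). set (sn := sin y). set (e := exp x).
      assert (Hcs2 : c * c + sn * sn = 1) by (unfold c, sn; pose proof (sin2_cos2 y); unfold Rsqr in *; lra).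
      set (w0 := (e * c, e * sn)).
      set (v := (w0 * w0 + 1)%C).
      assert (Hv1 : fst v = e * e * (c * c - sn * sn) + 1) by (unfold v, w0; simpl; ring).
      assert (Hv2 : snd v = 2 * e * e * c * sn) by (unfold v, w0; simpl; ring).
      assert (Hre : fst v * c + snd v * sn = c * (1 + e * e)).
      { rewrite Hv1, Hv2. transitivity (c * (1 + e * e) + e * e * c * (c * c + sn * sn - 1)); [ring|].
        rewrite Hcs2. ring. }
      rewrite <- Hre.
      set (r0 := (c, - sn)).
      assert (Hm : Cmod v = Cmod (v * r0)%C).
      { rewrite Cmod_mult. replace (Cmod r0) with 1. ring. unfold r0.
        unfold Cmod. cbn [fst snd]. replace (c ^ 2 + (- sn) ^ 2) with 1 by (rewrite <- Hcs2; ring).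
        symmetry; apply sqrt_1. }
      rewrite Hm. eapply Rle_trans; [|apply Cmod_ge_re]. simpl. lra. }
    assert (cos d * (1 + exp x * exp x) <= cos y * (1 + exp x * exp x)).
    { apply Rmult_le_compat_r; auto. pose proof (exp_pos x). nra. }
    lra.
  - rewrite HE. exact Hsu.
  - unfold dpsi. rewrite Cexp_2. rewrite <- Hwdef.
    replace (1 + w * w)%C with (w * w + 1)%C by ring. rewrite <- Hsdef. reflexivity.
  - rewrite Cexp_2, <- Hwdef. replace (1 + w * w)%C with (w * w + 1)%C by ring. exact HSS.
  - rewrite Cexp_m2, <- Hwdef.
    replace (1 + / (w * w))%C with ((w * w + 1) / (w * w))%C by (field; apply re_pos_neq0; auto).
    rewrite Cmod_div by auto. rewrite HSS, Cmod_mult. reflexivity.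
  - simpl. intros Hy0. subst y.
    assert (Im w = 0) by (rewrite Hwdef; unfold Cexp; simpl; rewrite sin_0; ring).
    assert (Im u = 0) by (rewrite Hudef; change (Im (w + s)%C) with (Im w + Im s); rewrite H, (Him H); ring).
    rewrite Hb. unfold t. rewrite H0. unfold Rdiv. rewrite Rmult_0_l. apply atan_0.
  - exact Hs0.
  - exact Hw0.
Qed.

Notation exdC f z := (@ex_derive C_AbsRing C_NormedModule f z).

Lemma isd_conv1 (f : C -> C) z l : @is_derive C_AbsRing C_NormedModule f z l ->
  @is_derive C_AbsRing (AbsRing_NormedModule C_AbsRing) f z l.
Proof. intros [[A B C] H2]. split; [split; [exact A|exact B|exact C]|exact H2]. Qed.

Lemma isd_conv2 (f : C -> C) z l : @is_derive C_AbsRing (AbsRing_NormedModule C_AbsRing) f z l ->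
  @is_derive C_AbsRing C_NormedModule f z l.
Proof. intros [[A B C] H2]. split; [split; [exact A|exact B|exact C]|exact H2]. Qed.

Lemma exd_mult (f g : C -> C) (z : C) : exdC f z -> exdC g z -> exdC (fun t => f t * g t)%C z.
Proof.
  intros [df Hf] [dg Hg].
  apply isd_conv1 in Hf. apply isd_conv1 in Hg.
  exists (plus (mult df (g z)) (mult (f z) dg)).
  apply isd_conv2.
  exact (@is_derive_mult C_AbsRing f g z df dg Hf Hg ltac:(intros; apply Cmult_comm)).
Qed.

Lemma exd_plus (f g : C -> C) (z : C) : exdC f z -> exdC g z -> exdC (fun t => f t + g t)%C z.
Proof. intros. apply (@ex_derive_plus C_AbsRing C_NormedModule f g z); auto. Qed.

Lemma exd_comp (f g : C -> C) (z : C) : exdC f (g z) -> exdC g z -> exdC (fun t => f (g t)) z.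
Proof. intros H1 [l Hl]. apply (@ex_derive_comp C_AbsRing C_NormedModule f g z); auto.
  exists l. apply isd_conv1; auto. Qed.

Lemma exd_const (a z : C) : exdC (fun _ => a) z.
Proof. exists zero. apply (@is_derive_const C_AbsRing C_NormedModule). Qed.

Lemma exd_Cexp (z : C) : exdC Cexp z.
Proof. exists (Cexp z). apply Dc_is_derive, Dc_Cexp. Qed.

Lemma exd_Clog (z : C) : 0 < Re z -> exdC Clog z.
Proof. intros. exists (/ z)%C. apply Dc_is_derive, Dc_Clog; auto. Qed.

Lemma exd_Csqrt (z : C) : 0 < Re (Csqrt z) -> exdC Csqrt z.
Proof. intros. exists (/ (2 * Csqrt z))%C. apply Dc_is_derive, Dc_Csqrt; auto. Qed.

Lemma exd_Cinv (z : C) : z <> 0%C -> exdC (fun t => / t)%C z.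
Proof. intros. exists (- / (z * z))%C. apply Dc_is_derive, Dc_Cinv; auto. Qed.

Lemma F_analytic (d : R) (f : C -> C) : 0 < d -> d < PI / 2 ->
  analytic_on (psi_strip d) f ->
  analytic_on (strip d) (fun zeta => (f (psi zeta) * dpsi zeta)%C).
Proof.
  intros Hd Hd2 Hf z Hz.
  assert (Hw : 0 < Re (Cexp z)).
  { destruct z as [x y]. unfold strip in Hz; simpl in Hz.
    unfold Cexp; simpl. apply Rmult_lt_0_compat; [apply exp_pos|].
    apply cos_gt_0; apply Rabs_def2 in Hz; lra. }
  assert (Hs : 0 < Re (Csqrt (Cexp z * Cexp z + 1))) by (apply sqrt_re_pos; auto).
  destruct (ws_facts (Cexp z) (Csqrt (Cexp z * Cexp z + 1)) Hw Hs (Csqrt_sq _)) as [Hu _].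
  assert (Hsq : exdC (fun t => Csqrt (Cexp t * Cexp t + 1)) z).
  { apply (exd_comp Csqrt (fun t => Cexp t * Cexp t + 1)%C).
    - apply exd_Csqrt; auto.
    - apply exd_plus; [apply exd_mult; apply exd_Cexp| apply exd_const]. }
  apply exd_mult.
  - apply (exd_comp f psi).
    + apply Hf. exists z. split; auto.
    + unfold psi, Casinh. apply (exd_comp Clog (fun t => Cexp t + Csqrt (Cexp t * Cexp t + 1))%C).
      * apply exd_Clog. auto.
      * apply exd_plus; [apply exd_Cexp| exact Hsq].
  - apply (ex_derive_ext (fun t => Cexp t * / Csqrt (Cexp t * Cexp t + 1))%C).
    + intros t. unfold dpsi. rewrite Cexp_2. replace (1 + Cexp t * Cexp t)%C with (Cexp t * Cexp t + 1)%C by ring.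
      reflexivity.
    + apply exd_mult; [apply exd_Cexp|].
      apply (exd_comp (fun t => / t)%C (fun t => Csqrt (Cexp t * Cexp t + 1))).
      * apply exd_Cinv. apply re_pos_neq0; auto.
      * exact Hsq.
Qed.

Lemma exp_mono (x y : R) : x <= y -> exp x <= exp y.
Proof. intros [H|H]; [left; apply exp_increasing; auto| subst; lra]. Qed.

Lemma core (K alpha beta c' : R) (p w s fz : C) :
  0 < K -> 0 < beta -> 0 < c' -> 0 < Re p -> 0 < Cmod w -> 0 < Cmod s -> Cmod s <= exp (Re p) ->
  (alpha - 1) * (ln (Cmod p) - ln (Cmod (1 + p))) <=
    ln c' + (alpha - 1) * (ln (Cmod w) - ln (Cmod s)) ->
  Cmod fz <= K * Cmod (Cpowp (p / (1 + p)) (RtoC (alpha - 1)) * Cexp (- (RtoC beta * p)))%C ->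
  Cmod (fz * (w / s))%C <=
    c' * K * Rpower ((Cmod s * Cmod s) / (Cmod w * Cmod w)) (- alpha / 2)
      * Rpower (Cmod s * Cmod s) (- beta / 2).
Proof.
  intros HK Hbeta Hc Hp Hw Hs Hse Hlog Hf.
  assert (Hp0 : p <> 0%C) by (apply re_pos_neq0; auto).
  assert (Hp1 : (1 + p)%C <> 0%C) by (apply re_pos_neq0; unfold Re in *; simpl; lra).
  assert (Hpm : 0 < Cmod p) by (apply Cmod_pos; auto).
  assert (Hp1m : 0 < Cmod (1 + p)%C) by (apply Cmod_pos; auto).
  assert (Hq0 : (p / (1 + p))%C <> 0%C).
  { intro H. assert (Cmod (p / (1 + p))%C = 0) by (rewrite H; apply Cmod_0).
    rewrite Cmod_div in H0 by auto. unfold Rdiv in H0. apply Rmult_integral in H0.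
    destruct H0; [lra|]. pose proof (Rinv_0_lt_compat _ Hp1m). lra. }
  assert (Hs0 : (s <> 0)%C) by (intro H; rewrite H, Cmod_0 in Hs; lra).
  rewrite Cmod_mult, Cmod_div in * by auto.
  unfold Cpowp in Hf. destruct (Ceq_dec (p / (1 + p)) 0) as [He|He]; [contradiction|].
  rewrite !Cmod_Cexp in Hf.
  unfold Clog in Hf. cbn [Re Im fst snd Cmult RtoC Copp] in Hf.
  rewrite Cmod_div in Hf by auto.
  rewrite ln_div in Hf by auto.
  set (lz := ln (Cmod p)) in *. set (ly := ln (Cmod (1 + p))) in *.
  set (lw := ln (Cmod w)) in *. set (ls := ln (Cmod s)) in *.
  set (a := Re p) in *.
  assert (HW : Cmod w = exp lw) by (unfold lw; rewrite exp_ln; auto).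
  assert (HS : Cmod s = exp ls) by (unfold ls; rewrite exp_ln; auto).
  assert (Hls : ls <= a) by (unfold ls; rewrite <- (ln_exp a); apply ln_le; auto).
  unfold Rpower.
  rewrite ln_div, !ln_mult by (try apply Rmult_lt_0_compat; auto). fold lw ls.
  rewrite HW, HS.
  change (fst p) with (Re p) in Hf. fold a in Hf. rewrite !Rmult_0_l, !Rminus_0_r in Hf.
  apply Rle_trans with (K * (exp ((alpha - 1) * (lz - ly)) * exp (- (beta * a))) * (exp lw / exp ls)).
  { apply Rmult_le_compat_r; [left; apply Rdiv_lt_0_compat; apply exp_pos|exact Hf]. }
  replace (K * (exp ((alpha - 1) * (lz - ly)) * exp (- (beta * a))) * (exp lw / exp ls))
    with (K * exp ((alpha - 1) * (lz - ly) - beta * a + (lw - ls))).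
  2:{ unfold Rdiv. rewrite <- exp_Ropp. rewrite Rmult_assoc, <- !exp_plus. f_equal. }
  replace (c' * K * exp (- alpha / 2 * (ls + ls - (lw + lw))) * exp (- beta / 2 * (ls + ls)))
    with (K * exp (ln c' + (- alpha / 2 * (ls + ls - (lw + lw))) + (- beta / 2 * (ls + ls)))).
  2:{ rewrite !exp_plus, exp_ln by auto. ring. }
  apply Rmult_le_compat_l; [lra|].

  assert (Hb : - beta * a <= - beta * ls) by (apply Rmult_le_compat_neg_l; lra).
  apply exp_mono. nra.
Qed.

Lemma log_sq (A B C D k : R) : 0 < A -> 0 < B -> 0 < C -> 0 < D -> 0 < k ->
  A * B <= k * C * D -> ln A + ln B <= ln k + ln C + ln D.
Proof.
  intros. rewrite <- !ln_mult by (try apply Rmult_lt_0_compat; auto).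
  apply ln_le; auto. apply Rmult_lt_0_compat; auto.
Qed.

Lemma ln_sq (x : R) : 0 < x -> ln (x * x) = 2 * ln x.
Proof. intros. rewrite ln_mult by auto. ring. Qed.

Lemma Cmod_p_sq (p : C) : Cmod p * Cmod p = Re p * Re p + Im p * Im p.
Proof. apply Cmod_sq. Qed.

Lemma Cmod_1p_sq (p : C) : Cmod (1 + p)%C * Cmod (1 + p)%C = (1 + Re p) * (1 + Re p) + Im p * Im p.
Proof. rewrite Cmod_sq. destruct p; simpl. ring. Qed.

Lemma log_ge1 (alpha k lz ly lw ls lc : R) : 1 <= alpha -> 0 < k ->
  2 * lz + 2 * ls <= ln k + 2 * lw + 2 * ly -> (alpha - 1) / 2 * ln k <= lc ->
  (alpha - 1) * (lz - ly) <= lc + (alpha - 1) * (lw - ls).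
Proof.
  intros Ha Hk H1 H2.
  assert ((alpha - 1) * (2 * (lz - ly) - 2 * (lw - ls) - ln k) <= 0).
  { 
    assert (0 <= alpha - 1) by lra. assert (2 * (lz - ly) - 2 * (lw - ls) - ln k <= 0) by lra. nra. }
  nra.
Qed.

Lemma log_lt1 (alpha k lz ly lw ls lc : R) : alpha < 1 -> 0 < k ->
  2 * lw + 2 * ly <= ln k + 2 * ls + 2 * lz -> (1 - alpha) / 2 * ln k <= lc ->
  (alpha - 1) * (lz - ly) <= lc + (alpha - 1) * (lw - ls).
Proof.
  intros Ha Hk H1 H2.
  assert (0 <= 1 - alpha) by lra. assert (2 * (lw - ls) + 2 * (ly - lz) - ln k <= 0) by lra.
  assert ((1 - alpha) * (2 * (lw - ls) + 2 * (ly - lz) - ln k) <= 0) by nra.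
  nra.
Qed.

Lemma real_e1 (x : R) : Cmod (1 + Cexp (2 * RtoC x))%C = 1 + exp (2 * x).
Proof.
  replace (1 + Cexp (2 * RtoC x))%C with (RtoC (1 + exp (2 * x))).
  - rewrite Cmod_R. apply Rabs_pos_eq. pose proof (exp_pos (2 * x)). lra.
  - unfold Cexp. apply Ceq; simpl; replace (2 * x - 0 * 0) with (2 * x) by ring;
    replace (2 * 0 + 0 * x) with 0 by ring; rewrite ?cos_0, ?sin_0; ring.
Qed.

Lemma real_e2 (x : R) : Cmod (1 + Cexp (- (2 * RtoC x)))%C = 1 + exp (- (2 * x)).
Proof.
  replace (1 + Cexp (- (2 * RtoC x)))%C with (RtoC (1 + exp (- (2 * x)))).
  - rewrite Cmod_R. apply Rabs_pos_eq. pose proof (exp_pos (- (2 * x))). lra.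
  - unfold Cexp. apply Ceq; simpl; replace (- (2 * x - 0 * 0)) with (- (2 * x)) by ring;
    replace (- (2 * 0 + 0 * x)) with 0 by ring; rewrite ?cos_0, ?sin_0; ring.
Qed.

Theorem lemma3 (d K alpha beta : R) (f : C -> C) :
  0 < d -> d < PI / 2 -> 0 < K -> 0 < alpha -> 0 < beta ->
  analytic_on (psi_strip d) f ->
  (forall z, psi_strip d z ->
     Cmod (f z) <=
       K * Cmod (Cpowp (z / (1 + z))%C (RtoC (alpha - 1))
                 * Cexp (- (RtoC beta * z)))%C) ->
  LSE (Rpower 2 (beta / 2) * c_const alpha d * K)
      (Rpower 2 ((1 - alpha + Rabs (1 - alpha)) / 2) * K)
      alpha beta d
      (fun zeta => (f (psi zeta) * dpsi zeta)%C).
Proof.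
  intros Hd Hd2 HK Ha Hb Han Hbd.
  assert (Hcd : 0 < cos d) by (apply cos_gt_0; lra).
  assert (Hcd1 : cos d <= 1) by (pose proof (COS_bound d); lra).
  assert (Hln2 : 0 < ln 2) by (rewrite <- ln_1; apply ln_increasing; lra).
  split; [apply F_analytic; auto|]. split.
  - intros zeta Hz.
    destruct (point_facts d zeta Hd Hd2 Hz) as
      [Ha0 [HP [HQ [Hbc [Hcs [Hsb [Hcos [HsE [Hdpsi [H2 [Hm2 [_ [Hs0 Hw0]]]]]]]]]]]]].
    rewrite Hdpsi, H2, Hm2.
    set (w := Cexp zeta) in *. set (s := Csqrt (w * w + 1)) in *.
    set (p := psi zeta) in *.
    apply (core K alpha beta (Rpower 2 (beta / 2) * c_const alpha d) p w s (f p)); auto.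
    + apply Rmult_lt_0_compat; [apply exp_pos|]. unfold c_const. destruct (Rlt_dec alpha 1); apply exp_pos.
    + rewrite ln_mult by (try apply exp_pos; unfold c_const; destruct (Rlt_dec alpha 1); apply exp_pos).
      rewrite ln_Rpower.
      assert (Hp0 : 0 < Cmod p) by (apply Cmod_pos; apply re_pos_neq0; auto).
      assert (Hp1 : 0 < Cmod (1 + p)%C) by (apply Cmod_pos; apply re_pos_neq0; change (0 < 1 + Re p); lra).
      set (a := Re p) in *. set (b := Im p) in *.
      set (E := exp a) in *. set (sh := (E - / E) / 2) in *.
      pose proof (sh_facts a Ha0) as [Hsh [Hch [Hshle [Hshch Hsh2]]]].
      fold E sh in Hsh, Hch, Hshle, Hshch, Hsh2.
      set (ch := (E + / E) / 2) in *.
      assert (HZ := Cmod_p_sq p). assert (HY := Cmod_1p_sq p). fold a b in HZ, HY.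
      assert (0 <= beta / 2 * ln 2) by (apply Rmult_le_pos; lra).
      unfold c_const. destruct (Rlt_dec alpha 1) as [Hlt|Hge].
      * rewrite ln_Rpower.
        assert (Hk : 0 < 2 * (1 + 1 / cos d)).
        { apply Rmult_lt_0_compat; [lra|]. assert (0 < 1 / cos d) by (apply Rdiv_lt_0_compat; lra). lra. }
        apply (log_lt1 alpha (2 * (1 + 1 / cos d))); [exact Hlt| exact Hk| |lra].
        rewrite <- !ln_sq by auto.
        apply log_sq.
        all: try (apply Rmult_lt_0_compat; assumption).
        all: try exact Hk.
        rewrite HP, HQ, HZ, HY.
        replace (2 * (1 + 1 / cos d)) with (2 + 2 / cos d) by (field; lra).
        apply (ineq_lt1 a b sh ch (cos b) (sin b) (cos d)); auto.
        rewrite <- HP, <- HQ. exact Hcos.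
      * rewrite ln_Rpower.
        apply (log_ge1 alpha 2); [lra|lra| |lra].
        rewrite <- !ln_sq by auto.
        apply log_sq.
        all: try (apply Rmult_lt_0_compat; assumption).
        all: try lra.
        rewrite HP, HQ, HZ, HY.
        apply ineq_ge1; auto. nra.
    + apply Hbd. exists zeta. split; auto.
  - intros x.
    assert (Hz : strip d (RtoC x)) by (unfold strip; simpl; rewrite Rabs_R0; lra).
    destruct (point_facts d (RtoC x) Hd Hd2 Hz) as
      [Ha0 [HP [HQ [Hbc [Hcs [Hsb [Hcos [HsE [Hdpsi [H2 [Hm2 [Hreal [Hs0 Hw0]]]]]]]]]]]]].
    rewrite <- real_e1, <- real_e2.
    rewrite Hdpsi, H2, Hm2.
    set (zeta := RtoC x) in *.
    set (w := Cexp zeta) in *. set (s := Csqrt (w * w + 1)) in *.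
    set (p := psi zeta) in *.
    apply (core K alpha beta (Rpower 2 ((1 - alpha + Rabs (1 - alpha)) / 2)) p w s (f p)); auto.
    + apply exp_pos.
    + rewrite ln_Rpower.
      assert (Hp0 : 0 < Cmod p) by (apply Cmod_pos; apply re_pos_neq0; auto).
      assert (Hp1 : 0 < Cmod (1 + p)%C) by (apply Cmod_pos; apply re_pos_neq0; change (0 < 1 + Re p); lra).
      set (a := Re p) in *. set (b := Im p) in *.
      assert (Hb0 : b = 0) by (apply Hreal; reflexivity).
      set (E := exp a) in *. set (sh := (E - / E) / 2) in *.
      pose proof (sh_facts a Ha0) as [Hsh [Hch [Hshle [Hshch Hsh2]]]].
      fold E sh in Hsh, Hch, Hshle, Hshch, Hsh2.
      set (ch := (E + / E) / 2) in *.
      assert (HZ := Cmod_p_sq p). assert (HY := Cmod_1p_sq p). fold a b in HZ, HY.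
      rewrite Hb0, sin_0, cos_0 in *.
      destruct (Rlt_dec alpha 1) as [Hlt|Hge].
      * rewrite Rabs_pos_eq by lra.
        apply (log_lt1 alpha 4); [exact Hlt| lra| |].
        2:{ replace 4 with (2 * 2) by ring. rewrite ln_mult by lra.
            replace ((1 - alpha + (1 - alpha)) / 2) with (1 - alpha) by field. lra. }
        rewrite <- !ln_sq by auto.
        apply log_sq.
        all: try (apply Rmult_lt_0_compat; assumption).
        all: try lra.
        rewrite HP, HQ, HZ, HY.
        replace (sh * sh + 0 * 0) with (sh * sh) by ring.
        replace (sh * sh + 1 * 1) with (sh * sh + 1) by ring.
        replace ((1 + a) * (1 + a) + 0 * 0) with ((1 + a) * (1 + a)) by ring.
        replace (a * a + 0 * 0) with (a * a) by ring.
        replace (4 * (sh * sh + 1) * (a * a)) with (4 * (sh * sh + 1) * (a * a)) by ring.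
        apply (ineq_lt1_real a sh ch); auto.
      * rewrite Rabs_left1 by lra.
        replace ((1 - alpha + - (1 - alpha)) / 2) with 0 by field.
        apply (log_ge1 alpha 1); [lra|lra| |rewrite ln_1; lra].
        rewrite <- !ln_sq by auto.
        apply log_sq.
        all: try (apply Rmult_lt_0_compat; assumption).
        all: try lra.
        rewrite HP, HQ, HZ, HY.
        replace (sh * sh + 0 * 0) with (sh * sh) by ring.
        replace (sh * sh + 1 * 1) with (sh * sh + 1) by ring.
        replace ((1 + a) * (1 + a) + 0 * 0) with ((1 + a) * (1 + a)) by ring.
        replace (a * a + 0 * 0) with (a * a) by ring.
        rewrite Rmult_1_l.
        apply ineq_ge1_real; auto.
    + apply Hbd. exists zeta. split; auto.
Qed.
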